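(* Let $\mathcal{H}$ be a Hilbert space of finite dimension $d$, let $\rho,\eta\in\mathcal{D}(\mathcal{H})$ be quantum states and let $s>0$. Then $\eta=\frac{\rho+s'\tau}{1+s'}$ for some real number $0<s'\le s$ and some state $\tau\in\mathcal{D}(\mathcal{H})$ if and only if $S_m\!\left(\frac{1+s}{s}\eta-\frac1s\rho\right)\ge 0$ for all $m=1,2,\dots,d$.
   Context: $\mathcal{D}(\mathcal{H})$ is the set of density operators on $\mathcal{H}$. For a Hermitian operator $X$ on $\mathcal{H}$, define recursively $S_0(X)=1$ and $S_m(X)=\frac1m\sum_{l=1}^m(-1)^{l-1}\operatorname{tr}[X^l]\,S_{m-l}(X)$ for $m\ge1$. *)

(* Defs.v *)
From HB Require Import structures.
From mathcomp Require Import all_boot all_order all_algebra.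
From mathcomp Require Export complex.
Set Implicit Arguments. Unset Strict Implicit. Unset Printing Implicit Defensive.
Import Order.TTheory GRing.Theory Num.Theory.
Local Open Scope ring_scope.

(* Scalars: C = R[i], the complex numbers over an arbitrary real closed
   field R (e.g. the real numbers).  The Hilbert space H of dimension d is
   C^d (column vectors 'cV[R[i]]_d); operators on H are d x d matrices. *)

Definition adjmx (R : rcfType) (m n : nat) (A : 'M[R[i]]_(m, n)) : 'M[R[i]]_(n, m) :=
  (map_mx Num.conj A)^T.

(* positive semidefinite operator: <v, A v> >= 0 for every vector v
   (over C this forces A to be Hermitian) *)
Definition psd (R : rcfType) (d : nat) (A : 'M[R[i]]_d) : Prop :=
  forall v : 'cV[R[i]]_d, 0 <= (adjmx v *m A *m v) 0 0.

Definition density (R : rcfType) (d : nat) (A : 'M[R[i]]_d) : Prop :=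
  psd A /\ \tr A = 1.

(* Sseq X m = [:: S_0(X); ...; S_m(X)], following the recursion
   S_0 = 1, S_m = 1/m * sum_{l=1}^m (-1)^(l-1) tr[X^l] S_(m-l)
   (index l here is shifted by one: l < m stands for l+1 in 1..m). *)
Fixpoint Sseq (R : rcfType) (d : nat) (X : 'M[R[i]]_d) (m : nat) : seq R[i] :=
  match m with
  | 0 => [:: 1]
  | m'.+1 =>
      let s := Sseq X m' in
      rcons s ((m'.+1)%:R^-1 *
        \sum_(l < m'.+1) (-1) ^+ l * \tr (X ^+ l.+1) * nth 0 s (m'.+1 - l.+1)%N)
  end.

Definition Sfun (R : rcfType) (d : nat) (X : 'M[R[i]]_d) (m : nat) : R[i] :=
  nth 0 (Sseq X m) m.

(* Main.v *)
Require Import Defs.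
From HB Require Import structures.
From mathcomp Require Import all_boot all_order all_algebra.
From mathcomp Require Import complex.
From mathcomp Require Import ring lra zify.
Import Order.TTheory GRing.Theory Num.Theory.
Local Open Scope ring_scope.
Set Implicit Arguments.

Section Mx.
Variable R : rcfType.
Local Notation C := (R[i]).
Variable d : nat.
Implicit Types A X : 'M[C]_d.

Lemma adjmxE m n (A : 'M[C]_(m, n)) i j : adjmx A i j = (A j i)^*.
Proof. by rewrite /adjmx !mxE. Qed.

Lemma adjmx_delta (i : 'I_d) : adjmx (delta_mx i 0 : 'cV[C]_d) = delta_mx 0 i.
Proof.
apply/matrixP => a b; rewrite adjmxE !mxE.
by case: (b == i); case: (a == 0); rewrite /= ?conjC0 ?conjC1.
Qed.

Lemma qf_delta A (i j : 'I_d) :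
  (adjmx (delta_mx i 0 : 'cV[C]_d) *m A *m (delta_mx j 0 : 'cV[C]_d)) 0 0 = A i j.
Proof. by rewrite adjmx_delta -rowE -colE !mxE. Qed.

Lemma adjmxDZ (u w : 'cV[C]_d) c : adjmx (u + c *: w) = adjmx u + c^* *: adjmx w.
Proof. by apply/matrixP => a b; rewrite !(adjmxE, mxE) rmorphD rmorphM. Qed.

Lemma qf_expand A (u w : 'cV[C]_d) c :
  (adjmx (u + c *: w) *m A *m (u + c *: w)) 0 0 =
  (adjmx u *m A *m u) 0 0 + c * (adjmx u *m A *m w) 0 0
  + c^* * (adjmx w *m A *m u) 0 0 + c^* * c * (adjmx w *m A *m w) 0 0.
Proof.
rewrite adjmxDZ !mulmxDl !mulmxDr -!scalemxAl -!scalemxAr !mxE.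
rewrite ?(mxE, scalerA); ring.
Qed.

Lemma psd_herm A : psd A -> A \is hermsymmx.
Proof.
move=> hA; rewrite qualifE /= expr0 scale1r; apply/eqP/matrixP => i j.
rewrite !mxE.
set a := A i j; set b := A j i.
have hq k : A k k \is Num.real.
  by apply: ger0_real; have := hA (delta_mx k 0); rewrite qf_delta.
have h1 := hA (delta_mx i 0 + 1 *: delta_mx j 0).
have h2 := hA (delta_mx i 0 + 'i *: delta_mx j 0).
rewrite qf_expand !qf_delta conjC1 !mul1r -/a -/b in h1.
rewrite qf_expand !qf_delta conjCi -/a -/b in h2.
have r1 : a + b \is Num.real.
  have := ger0_real h1.
  have -> : A i i + a + b + A j j = (a + b) + (A i i + A j j) by ring.
  by rewrite rpredDr // rpredD.
have r2 : 'i * (a - b) \is Num.real.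
  have := ger0_real h2.
  have -> : A i i + 'i * a + - 'i * b + - 'i * 'i * A j j
     = 'i * (a - b) + (A i i - 'i ^+ 2 * A j j) by ring.
  by rewrite sqrCi mulN1r opprK rpredDr // rpredD.
move: r1 r2; rewrite !CrealE rmorphD rmorphM rmorphB /= conjCi => /eqP E1 /eqP E2.
have E3 : a^* - b^* = b - a.
  have : 'i * (- 'i * (a^* - b^*)) = 'i * ('i * (a - b)) by rewrite E2.
  rewrite !mulrA mulrN -expr2 sqrCi opprK mul1r mulN1r => ->; ring.
have h22 : a^* *+ 2 = b *+ 2.
  have -> : b *+ 2 = (a + b) + (b - a) by ring.
  rewrite -E1 -E3; ring.
have hb : a^* = b.
  by move: h22; rewrite -(mulr_natr a^* 2) -(mulr_natr b 2) => /mulIf; apply; rewrite pnatr_eq0.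
by rewrite -hb conjCK.
Qed.

Lemma adjmxM m n p (A : 'M[C]_(m, n)) (B : 'M[C]_(n, p)) :
  adjmx (A *m B) = adjmx B *m adjmx A.
Proof. by rewrite /adjmx map_mxM trmx_mul. Qed.

Section Spec.
Variable X : 'M[C]_d.
Hypothesis hX : X \is hermsymmx.
Let P := spectralmx X.
Let lam := spectral_diag X.

Lemma spec_eq : X = invmx P *m diag_mx lam *m P.
Proof. exact/orthomx_spectralP/hermitian_normalmx. Qed.

Lemma Punit : P \in unitmx.
Proof. exact: spectral_unit. Qed.

Lemma adjP : adjmx P = invmx P.
Proof. by rewrite invmx_unitary ?spectral_unitarymx // /adjmx map_trmx. Qed.

Lemma qX (v : 'cV[C]_d) : (adjmx v *m X *m v) 0 0 =
  (adjmx (P *m v) *m diag_mx lam *m (P *m v)) 0 0.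
Proof. by rewrite {1}spec_eq adjmxM adjP !mulmxA. Qed.

Lemma psd_spec : psd X <-> (forall j, 0 <= lam 0 j).
Proof.
split.
  move=> h j; have := h (invmx P *m delta_mx j 0); rewrite qX mulKVmx ?Punit //.
  by rewrite qf_delta mxE eqxx mulr1n.
move=> h v; rewrite qX; set w := P *m v.
rewrite mxE; apply: sumr_ge0 => k _.
rewrite mul_mx_diag !mxE mulrAC; apply: mulr_ge0 => //.
by rewrite mulrC mul_conjC_ge0.
Qed.

Lemma pow_spec k : X ^+ k = invmx P *m diag_mx (\row_j (lam 0 j ^+ k)) *m P.
Proof.
elim: k => [|k IH].
  have -> : \row_j (lam 0 j ^+ 0) = const_mx 1 by apply/rowP => j; rewrite !mxE expr0.
  by rewrite diag_const_mx mulmx1 mulVmx ?Punit.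
rewrite exprS -mulmxE IH {1}spec_eq !mulmxA -[_ *m P *m invmx P]mulmxA mulmxV ?Punit //.
rewrite mulmx1 -[invmx P *m _ *m diag_mx _]mulmxA mulmx_diag; congr (_ *m diag_mx _ *m _).
by apply/rowP => j; rewrite !mxE exprS.
Qed.

Lemma tr_spec k : \tr (X ^+ k) = \sum_j lam 0 j ^+ k.
Proof.
rewrite pow_spec mxtrace_mulC mulmxA mulmxV ?Punit // mul1mx mxtrace_diag.
by apply: eq_bigr => j _; rewrite mxE.
Qed.

Lemma lam_real j : lam 0 j \is Num.real.
Proof. by have /mxOverP := hermitian_spectral_diag_real hX; apply. Qed.
End Spec.
End Mx.
Set Implicit Arguments.
Section Newton.
Context {C : numFieldType}.
Definition Fx (x : C) : {poly C} := x%:P * 'X + 1.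
Definition Ep (s : seq C) : {poly C} := \prod_(x <- s) Fx x.
Definition Tp (N : nat) (s : seq C) : {poly C} :=
  \sum_(x <- s) x%:P * \poly_(l < N) ((-x) ^+ l).
Definition eqlow (N : nat) (p q : {poly C}) := forall k, (k < N)%N -> p`_k = q`_k.

Lemma eqlowM N r p q : eqlow N p q -> eqlow N (r * p) (r * q).
Proof.
move=> h k kN; rewrite !coefM; apply: eq_bigr => j _; rewrite h //.
exact: leq_ltn_trans (leq_subr _ _) kN.
Qed.

Lemma geomF x N : Fx x * \poly_(l < N) ((-x) ^+ l) = 1 - ((-x) ^+ N)%:P * 'X^N.
Proof.
set y := (-x)%:P * 'X.
have yl : forall l, y ^+ l = ((-x) ^+ l)%:P * 'X^l by move=> l; rewrite exprMn polyC_exp.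
have -> : \poly_(l < N) ((-x) ^+ l) = \sum_(l < N) y ^+ l.
  by rewrite poly_def; apply: eq_bigr => l _; rewrite yl mul_polyC.
have -> : Fx x = - (y - 1) by rewrite /Fx /y polyCN mulNr opprB opprK addrC.
by rewrite mulNr -subrX1 opprB yl.
Qed.

Lemma derivFx x : (Fx x)^`() = x%:P.
Proof. by rewrite /Fx -polyC1 derivMXaddC derivC mul0r addr0. Qed.

Lemma key N s : eqlow N (Ep s)^`() (Tp N s * Ep s).
Proof.
elim: s => [|x s IH].
  by move=> k _; rewrite /Ep /Tp !big_nil mul0r -polyC1 derivC.
rewrite /Ep /Tp !big_cons -/(Ep s) -/(Tp N s) derivM derivFx.
set E := Ep s; set G := \poly_(l < N) ((-x) ^+ l).
have -> : (x%:P * G + Tp N s) * (Fx x * E)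
   = x%:P * E - (x%:P * ((-x) ^+ N)%:P * E) * 'X^N + Fx x * (Tp N s * E).
  have h := geomF x N; rewrite -/G in h.
  have -> : (x%:P * G + Tp N s) * (Fx x * E) = x%:P * E * (Fx x * G) + Fx x * (Tp N s * E) by ring.
  by rewrite h; ring.
move=> k kN; rewrite !coefD coefN coefMXn kN subr0; congr (_ + _).
exact: (eqlowM (Fx x) IH k kN).
Qed.

Lemma newton s m : (Ep s)`_m.+1 *+ m.+1 =
  \sum_(l < m.+1) (-1) ^+ l * (\sum_(x <- s) x ^+ l.+1) * (Ep s)`_(m - l).
Proof.
rewrite -coef_deriv (key m.+1 s m (ltnSn m)) coefM; apply: eq_bigr => l _.
congr (_ * _); rewrite /Tp coef_sum mulr_sumr; apply: eq_bigr => x _.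
by rewrite coefCM coef_poly ltn_ord exprS mulrCA -exprNn.
Qed.

Lemma Ep_coef0 s : (Ep s)`_0 = 1.
Proof.
elim: s => [|x s IH]; first by rewrite /Ep big_nil coef1.
by rewrite /Ep big_cons coef0M -/(Ep s) IH mulr1 /Fx coefD coefMX coef1 add0r.
Qed.

Lemma Ep_size s : (size (Ep s) <= (size s).+1)%N.
Proof.
elim: s => [|x s IH]; first by rewrite /Ep big_nil size_poly1.
rewrite /Ep big_cons -/(Ep s).
have hF : (size (Fx x) <= 2)%N.
  rewrite /Fx -polyC1 size_MXaddC; case: ifP => // _.
  by have := size_polyC_leq1 x.
apply: leq_trans (size_mul_leq _ _) _ => /=.
move: hF IH; set a := size _; set b := size _; lia.
Qed.

Lemma Ep_ge0 (s : seq C) : (forall x, x \in s -> 0 <= x) -> forall k, 0 <= (Ep s)`_k.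
Proof.
elim: s => [|x s IH] hs k.
  by rewrite /Ep big_nil coef1; case: (k == 0)%N.
rewrite /Ep big_cons -/(Ep s) coefM; apply: sumr_ge0 => j _; apply: mulr_ge0.
  rewrite /Fx coefD coefMX coef1 coefC.
  have := hs x (mem_head _ _).
  by case: (nat_of_ord j) => [|[|j']] /=; rewrite ?addr0 ?add0r ?ler01.
by apply: IH => y ys; apply: hs; rewrite in_cons ys orbT.
Qed.

Lemma Ep_root (s : seq C) (x : C) : x \in s -> x != 0 -> (Ep s).[- x^-1] = 0.
Proof.
move=> xs x0; rewrite /Ep horner_prod; apply/eqP; rewrite prodf_seq_eq0.
apply/hasP; exists x => //=.
by rewrite /Fx hornerD hornerMX hornerC hornerC mulrN divff // addrC subrr.
Qed.

Lemma Ep_pos (s : seq C) : (forall x, x \in s -> x \is Num.real) ->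
  (forall k, (1 <= k <= size s)%N -> 0 <= (Ep s)`_k) ->
  forall x, x \in s -> 0 <= x.
Proof.
move=> hr hk x xs; have [//|hx] := boolP (0 <= x); exfalso.
have xneg : x < 0 by rewrite real_ltNge ?(hr x xs) ?real0.
have x0 : x != 0 by rewrite lt_eqF.
set t := - x^-1.
have t0 : 0 <= t by rewrite oppr_ge0 ltW // invr_lt0.
have := Ep_root s x xs x0; rewrite -/t (horner_coef_wide _ (Ep_size s)) big_ord_recl.
rewrite Ep_coef0 expr0 mulr1 => h.
have : 0 <= \sum_(i < size s) (Ep s)`_(bump 0 i) * t ^+ bump 0 i.
  apply: sumr_ge0 => i _; apply: mulr_ge0; last exact: exprn_ge0.
  by apply: hk; rewrite /bump /= add1n ltn_ord.
rewrite -[X in 0 <= X](addKr 1) h addr0 oppr_ge0 => /(le_lt_trans)/(_ ltr01).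
by rewrite ltxx.
Qed.
End Newton.
Section Glue.
Variable R : rcfType.
Local Notation C := (R[i]).

Lemma Sfun_Ep d (X : 'M[C]_d) (s : seq C) :
  (forall l, \tr (X ^+ l.+1) = \sum_(x <- s) x ^+ l.+1) ->
  forall m, Sfun X m = (Ep s)`_m.
Proof.
move=> htr.
have H : forall m, Sseq X m = mkseq (fun k => (Ep s)`_k) m.+1.
  elim=> [|m IH]; first by rewrite /= /mkseq /= Ep_coef0.
  rewrite [Sseq X m.+1]/= IH [in RHS]mkseqS; congr rcons.
  have -> : \sum_(l < m.+1) (-1) ^+ l * \tr (X ^+ l.+1) *
      nth 0 (mkseq (fun k => (Ep s)`_k) m.+1) (m.+1 - l.+1)
    = \sum_(l < m.+1) (-1) ^+ l * (\sum_(x <- s) x ^+ l.+1) * (Ep s)`_(m - l).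
    apply: eq_bigr => l _; rewrite htr nth_mkseq ?subSS //.
    exact: leq_ltn_trans (leq_subr _ _) (ltnSn m).
  rewrite -newton -(mulr_natr ((Ep s)`_m.+1)) [_ * _%:R]mulrC mulKf //.
  by rewrite pnatr_eq0.
by move=> m; rewrite /Sfun H nth_mkseq.
Qed.

Lemma herm_entries d (A : 'M[C]_d) :
  A \is hermsymmx <-> (forall i j, A j i = (A i j)^*).
Proof.
rewrite qualifE /= expr0 scale1r; split.
  by move=> /eqP h i j; rewrite {1}h !mxE.
by move=> h; apply/eqP/matrixP => i j; rewrite !mxE; apply: h.
Qed.

Lemma S_psd d (X : 'M[C]_d) : X \is hermsymmx ->
  (psd X <-> forall m, (1 <= m <= d)%N -> 0 <= Sfun X m).
Proof.
move=> hX.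
set lam := spectral_diag X.
set s := [seq lam 0 j | j <- enum 'I_d].
have hs : forall l, \tr (X ^+ l.+1) = \sum_(x <- s) x ^+ l.+1.
  by move=> l; rewrite (@tr_spec R d X hX) big_map big_enum.
have sz : size s = d by rewrite size_map size_enum_ord.
split.
  move=> /(@psd_spec R d X hX) h m _; rewrite (Sfun_Ep _ hs); apply: Ep_ge0 => x.
  by move=> /mapP [j _ ->]; apply: h.
move=> h; apply/(@psd_spec R d X hX) => j.
apply: (@Ep_pos _ s).
- by move=> x /mapP [k _ ->]; apply: (@lam_real R d X hX).
- by move=> k; rewrite sz => hk; rewrite -(Sfun_Ep _ hs); apply: h.
- by apply: map_f; rewrite mem_enum.
Qed.
End Glue.

Section Main.
Variable R : rcfType.
Local Notation C := (R[i]).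

Lemma qf_lin d (A B : 'M[C]_d) (a b : C) (v : 'cV[C]_d) :
  (adjmx v *m (a *: A + b *: B) *m v) 0 0 =
  a * (adjmx v *m A *m v) 0 0 + b * (adjmx v *m B *m v) 0 0.
Proof. by rewrite mulmxDr mulmxDl -!scalemxAr -!scalemxAl !mxE. Qed.

Lemma herm_lin d (A B : 'M[C]_d) (a b : C) :
  a \is Num.real -> b \is Num.real -> A \is hermsymmx -> B \is hermsymmx ->
  a *: A + b *: B \is hermsymmx.
Proof.
move=> ra rb /herm_entries hA /herm_entries hB; apply/herm_entries => i j.
by rewrite !mxE hA hB rmorphD !rmorphM /= (conj_Creal ra) (conj_Creal rb).
Qed.

Lemma real_pos (x : R) : (0 < x) -> 0 < (x%:C)%C :> C.
Proof. by move=> hx; rewrite ltcE /= eqxx hx. Qed.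
End Main.

Theorem lemma4 (R : rcfType) (d : nat) (rho eta : 'M[R[i]]_d) (s : R) :
  density rho -> density eta -> 0 < s ->
  (exists (s' : R) (tau : 'M[R[i]]_d),
      [/\ 0 < s', s' <= s, density tau &
          eta = (1 + (s'%:C)%C)^-1 *: (rho + (s'%:C)%C *: tau)])
  <->
  (forall m : nat, (1 <= m <= d)%N ->
      0 <= Sfun (((1 + (s%:C)%C) / (s%:C)%C) *: eta - (s%:C)%C^-1 *: rho) m).
Proof.
move=> [hrho trrho] [heta treta] s0.
have sC0 := @real_pos R s s0.
set sC := (s%:C)%C in sC0 *.
have sCn0 : sC != 0 by rewrite gt_eqF.
have sC1 : 1 + sC != 0 by rewrite gt_eqF // addr_gt0 // ltr01.
set a := (1 + sC) / sC.
set b := sC^-1.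
have ra : a \is Num.real by rewrite rpredM ?rpredV ?rpredD ?ger0_real ?ltW.
have rb : b \is Num.real by rewrite rpredV ger0_real ?ltW.
set X := a *: eta - b *: rho.
have hX : X \is hermsymmx.
  by rewrite /X -scaleNr herm_lin ?rpredN ?psd_herm.
rewrite -(@S_psd R d X hX); split.
  move=> [s' [tau [s'0 s's [htau trtau] eeta]]].
  have s'C0 := @real_pos R s' s'0.
  set s'C := (s'%:C)%C in s'C0 eeta *.
  have s'C1 : 1 + s'C != 0 by rewrite gt_eqF // addr_gt0 // ltr01.
  have hs' : s'C <= sC by rewrite lecE /= eqxx s's.
  have -> : X = (a / (1 + s'C) - b) *: rho + (a / (1 + s'C) * s'C) *: tau.
    by rewrite /X eeta scalerDr !scalerA scalerDr !scalerA addrAC -scalerBl mulrA.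
  move=> v; rewrite qf_lin; apply: addr_ge0; apply: mulr_ge0; rewrite ?hrho ?htau //.
    have -> : a / (1 + s'C) - b = (sC - s'C) / (sC * (1 + s'C)) by rewrite /a /b; field; rewrite ?sCn0 ?s'C1.
    by rewrite divr_ge0 ?subr_ge0 // mulr_ge0 ?ltW // addr_gt0 // ltr01.
  have a0 : 0 <= a by rewrite /a divr_ge0 // ltW // addr_gt0 // ltr01.
  by rewrite !mulr_ge0 // ?invr_ge0 ltW // addr_gt0 // ltr01.
move=> hpsd; exists s, X; split => //.
  by split => //; rewrite raddfB /= !mxtraceZ treta trrho !mulr1 /a /b; field; rewrite ?sCn0.
rewrite -/sC /X scalerBr !scalerA.
have -> : sC * a = 1 + sC by rewrite /a; field; rewrite ?sCn0.
have -> : sC * b = 1 by rewrite /b; field; rewrite ?sCn0.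
by rewrite scale1r [rho + _]addrC subrK scalerA mulVf // scale1r.
Qed.
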